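(* Let $K$ be a simplicial complex and $K'\subset K$ a subcomplex. Then $K'$ is nice if and only if every simplex $\Delta\in K$ that equals the convex hull of $\Delta\cap K'$ belongs to $K'$.
   Context: A simplicial complex is a locally finite set of linear simplices in $\mathbb{R}^N$ closed under faces with pairwise intersections common faces. For $\Delta\in K$, $\Delta\cap K'$ denotes the subcomplex of $K'$ consisting of the simplices of $K'$ that are faces of $\Delta$ (the maximal subcomplex of $K'$ contained in $\Delta$). Two simplices are adjacent if they share a face; $\operatorname{star}(K')$ is the set of simplices of $K$ adjacent to some simplex of $K'$, together with their faces. $K'$ is nice if for every $\Delta\in\operatorname{star}(K')$, the subcomplex $\Delta\cap K'$ is a (single) face of $\Delta$ together with its faces. *)

(* Defs.v *)
From HB Require Import structures.
From mathcomp Require Import all_boot all_order all_algebra finmap.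
From mathcomp Require Import reals.
Set Implicit Arguments. Unset Strict Implicit. Unset Printing Implicit Defensive.
Import Order.TTheory GRing.Theory Num.Theory.
Local Open Scope ring_scope.
Local Open Scope fset_scope.

Section SimplicialDefs.
Variables (R : realType) (N : nat).

Definition point := 'rV[R]_N.

(* A linear simplex is represented by its (finite) vertex set; the geometric
   simplex is the convex hull [conv s] of the vertices. *)
Definition vsimplex := {fset point}.

Definition hull (S : point -> Prop) : point -> Prop :=
  fun p => exists (s : seq point) (w : point -> R),
    [/\ (forall x, x \in s -> S x), (forall x, 0 <= w x),
        \sum_(x <- s) w x = 1 & p = \sum_(x <- s) w x *: x].

Definition conv (s : vsimplex) : point -> Prop := hull (fun x => x \in s).

Definition aff_indep (s : vsimplex) : Prop :=
  forall w : point -> R,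
    \sum_(x <- s) w x = 0 -> \sum_(x <- s) w x *: x = 0 ->
    forall x, x \in s -> w x = 0.

Definition is_simplex (s : vsimplex) : Prop := s != fset0 /\ aff_indep s.

Definition face (t s : vsimplex) : Prop := t != fset0 /\ t `<=` s.

Definition sqdist (x y : point) : R := \sum_(i < N) (x ord0 i - y ord0 i) ^+ 2.

Definition locally_finite (K : vsimplex -> Prop) : Prop :=
  forall x : point, exists r : R, 0 < r /\
    exists L : seq vsimplex, forall s, K s ->
      (exists y, conv s y /\ sqdist x y < r ^+ 2) -> s \in L.

Definition simplicial_complex (K : vsimplex -> Prop) : Prop :=
  [/\ (forall s, K s -> is_simplex s),
      (forall s t, K s -> face t s -> K t),
      (forall s t, K s -> K t ->
         (forall x, ~ (conv s x /\ conv t x)) \/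
         exists r, [/\ face r s, face r t &
                       forall x, (conv s x /\ conv t x) <-> conv r x])
    & locally_finite K].

Definition subcomplex (K' K : vsimplex -> Prop) : Prop :=
  (forall s, K' s -> K s) /\ (forall s t, K' s -> face t s -> K' t).

(* Delta ∩ K' : simplices of K' that are faces of Delta *)
Definition cap_sub (D : vsimplex) (K' : vsimplex -> Prop) : vsimplex -> Prop :=
  fun s => K' s /\ face s D.

Definition adjacent (s t : vsimplex) : Prop := exists r, face r s /\ face r t.

Definition star (K K' : vsimplex -> Prop) : vsimplex -> Prop :=
  fun s => exists t r, [/\ K t, K' r, adjacent t r & face s t].

(* nice: for Delta in star(K'), Delta ∩ K' is a face F of Delta together with
   its faces; F is allowed to be empty (then Delta ∩ K' is empty). *)
Definition nice (K K' : vsimplex -> Prop) : Prop :=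
  forall D, star K K' D ->
    exists F : vsimplex, F `<=` D /\
      forall s, cap_sub D K' s <-> face s F.

Definition hull_cap (D : vsimplex) (K' : vsimplex -> Prop) : point -> Prop :=
  hull (fun x => exists s, cap_sub D K' s /\ conv s x).

End SimplicialDefs.

(* Main.v *)
Require Import Defs.
From HB Require Import structures.
From mathcomp Require Import all_boot all_order all_algebra finmap.
From mathcomp Require Import reals.
From mathcomp Require Import boolp.
Set Implicit Arguments. Unset Strict Implicit. Unset Printing Implicit Defensive.
Import Order.TTheory GRing.Theory Num.Theory.
Local Open Scope ring_scope.

Section Aux.
Variables (R : realType) (N : nat).
Local Notation pt := (point R N).
Local Notation vs := (vsimplex R N).

Lemma sum_sub (V : zmodType) (s t : seq pt) (g : pt -> V) :
  uniq s -> uniq t -> {subset t <= s} ->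
  \sum_(y <- s) (if y \in t then g y else 0) = \sum_(y <- t) g y.
Proof.
move=> us ut sub; rewrite -big_mkcond -big_filter; apply: perm_big.
apply: uniq_perm; first exact: filter_uniq.
  by [].
by move=> y; rewrite mem_filter; case yt: (y \in t) => //=; rewrite sub.
Qed.

Definition rep (F : vs) (p : pt) (c : pt -> R) (t : R) :=
  [/\ forall y, 0 <= c y, \sum_(y <- F) c y = t & p = \sum_(y <- F) c y *: y].

Lemma rep_vertex (F : vs) x : x \in F -> rep F x (fun y => (y \in [:: x])%:R) 1.
Proof.
move=> xF; split.
- by move=> y; case: (y \in _).
- have sx : {subset [:: x] <= F} by move=> y; rewrite inE => /eqP ->.
  have := sum_sub (fun _ => (1 : R)) (fset_uniq F) (isT : uniq [:: x]) sx.
  rewrite big_seq1 => H; rewrite -H.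
  by apply: eq_bigr => y _; case: (y \in _).
- have sx : {subset [:: x] <= F} by move=> y; rewrite inE => /eqP ->.
  have := sum_sub (fun y => y) (fset_uniq F) (isT : uniq [:: x]) sx.
  rewrite big_seq1 => H; rewrite -{1}H.
  by apply: eq_bigr => y _; case: (y \in _); rewrite ?scale1r ?scale0r.
Qed.

Lemma comb (F : vs) (s : seq pt) (w : pt -> R) :
  (forall x, x \in s -> exists c, rep F x c 1) -> (forall x, 0 <= w x) ->
  exists c, rep F (\sum_(x <- s) w x *: x) c (\sum_(x <- s) w x).
Proof.
move=> Hs w0; elim: s Hs => [|x s IH] Hs.
  exists (fun _ => 0); split => //; rewrite ?big_nil big1 // => y _.
  by rewrite scale0r.
have [cx [cx0 cxs cxe]] := Hs x (mem_head _ _).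
have [cr [cr0 crs cre]] := IH (fun y ys => Hs y (mem_behead (s := x :: s) ys)).
exists (fun y => w x * cx y + cr y); split.
- by move=> y; rewrite addr_ge0 // mulr_ge0.
- by rewrite big_split /= -mulr_sumr cxs crs mulr1 big_cons.
- rewrite big_cons cxe cre scaler_sumr -big_split /=; apply: eq_bigr => y _.
  by rewrite scalerA scalerDl.
Qed.

Lemma rep_conv (F : vs) p c : rep F p c 1 -> conv F p.
Proof. by move=> [c0 cs ce]; exists F, c; split. Qed.

Lemma conv_sub (F s : vs) p : (s `<=` F)%fset -> conv s p -> exists c, rep F p c 1.
Proof.
move=> /fsubsetP sF [q [w [Hq w0 ws ->]]].
have [c [c0 cs ce]] := comb (F := F) (s := q) (w := w)
  (fun x xq => ex_intro (fun c => rep F x c 1) _ (rep_vertex (sF _ (Hq _ xq)))) w0.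
by exists c; split; rewrite -?ws.
Qed.

Lemma hullcap_rep (D F : vs) K' p : hull_cap D K' p ->
  (forall s, cap_sub D K' s -> (s `<=` F)%fset) -> exists c, rep F p c 1.
Proof.
move=> [q [w [Hq w0 ws ->]]] HF.
have : forall x, x \in q -> exists c, rep F x c 1.
  move=> x /Hq [s [cs xs]]; exact: conv_sub (HF _ cs) xs.
move=> /(comb) /(_ w0) [c [c0 cs ce]].
by exists c; split; rewrite -?ws.
Qed.

Lemma sum_subf (V : zmodType) (s t : vs) (g : pt -> V) :
  (t `<=` s)%fset ->
  \sum_(y <- s) (if y \in t then g y else 0) = \sum_(y <- t) g y.
Proof.
move=> /fsubsetP ts; rewrite -(sum_sub g (fset_uniq s) (fset_uniq t)) //.
Qed.

End Aux.

Theorem lemma3p10 (R : realType) (N : nat) (K K' : vsimplex R N -> Prop) :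
  simplicial_complex K -> subcomplex K' K ->
  (nice K K' <->
   forall D : vsimplex R N, K D ->
     (forall x, conv D x <-> hull_cap D K' x) -> K' D).
Proof.
move=> [Ksimp Kface _ _] [K'K K'face]; split.
- move=> Hnice D KD Hconv.
  have [Dne Dai] := Ksimp D KD.
  case/fset0Pn: (Dne) => v vD.
  have := (Hconv v).1 (rep_conv (rep_vertex vD)).
  case=> [[|x q]] [w [Hq _ ws _]]; first by move: ws; rewrite big_nil => /eqP; rewrite eq_sym oner_eq0.
  have [s [[K's [sne sD]] _]] := Hq x (mem_head _ _).
  have stD : star K K' D.
    exists D, s; split => //.
    by exists s; split => //; split => //; by apply/fsubsetP.
  have [F [FD HF]] := Hnice D stD.
  have DF : (D `<=` F)%fset.
    apply/fsubsetP => u uD; apply/negPn/negP => uF.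
    have := hullcap_rep ((Hconv u).1 (rep_conv (rep_vertex uD)))
      (fun s cs => ((HF s).1 cs).2).
    case=> c [c0 cs ce].
    have FDs : {subset F <= D} by apply/fsubsetP.
    have uDs : {subset [:: u] <= D} by move=> y; rewrite inE => /eqP ->.
    have := Dai (fun y => (if y \in F then c y else 0) - (if y \in [:: u] then 1 else 0)).
    rewrite big_split /= sumrN sum_subf // (sum_sub (fun _ => 1) (fset_uniq D) (isT : uniq [:: u]) uDs) big_seq1 cs subrr.
    move=> /(_ erefl).
    have e1 : forall y : point R N, (if y \in F then c y else 0) *: y = if y \in F then c y *: y else 0.
      by move=> y; case: (y \in F); rewrite ?scale0r.
    have e2 : forall y : point R N, (if y \in [:: u] then 1 else 0) *: y = if y \in [:: u] then y else 0.
      by move=> y; case: (y \in [:: u]); rewrite ?scale0r ?scale1r.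
    under eq_bigr => y _ do rewrite scalerBl e1 e2.
    rewrite big_split /= sumrN sum_subf //.
    rewrite (sum_sub id (fset_uniq D) (isT : uniq [:: u]) uDs) big_seq1 -ce subrr => /(_ erefl u uD).
    by rewrite (negbTE uF) mem_head sub0r => /eqP; rewrite oppr_eq0 oner_eq0.
  have FeD : F = D by apply/eqP; rewrite eqEfsubset FD DF.
  by have [] := (HF D).2 (conj Dne (eq_rect_r (fun X => (D `<=` X)%fset) (fsubset_refl D) FeD)).
- move=> P D [t [r [Kt K'r _ fDt]]].
  have KD := Kface t D Kt fDt.
  exists [fset v in D | `[< K' [fset v]%fset >]]%fset; split.
    by apply/fsubsetP => v; rewrite !inE => /andP[].
  move=> s; split.
  + move=> [K's [sne sD]]; split => //; apply/fsubsetP => v vs.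
    rewrite !inE (fsubsetP sD _ vs) /=; apply/asboolP.
    by apply: K'face K's _; split; [apply/fset0Pn; exists v; rewrite inE | rewrite fsub1set].
  + move=> [sne sF].
    have sD : (s `<=` D)%fset.
      by apply: fsubset_trans sF _; apply/fsubsetP => v; rewrite !inE => /andP[].
    have Ks := Kface D s KD (conj sne sD).
    split; last by split.
    apply: P Ks _ => p; split.
    * move=> [q [w [Hq w0 ws pe]]]; exists q, w; split => // y /Hq ys.
      have := fsubsetP sF _ ys; rewrite !inE => /andP[_ /asboolP K'y].
      exists [fset y]%fset; split; last by apply: rep_conv (rep_vertex _); rewrite inE.
      by split => //; split; [apply/fset0Pn; exists y; rewrite inE | rewrite fsub1set].
    * move=> hc; have [c rc] := hullcap_rep hc (fun s' cs' => cs'.2.2).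
      exact: rep_conv rc.
Qed.
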